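(* Let $I\subset\mathbb R$ be an interval. (i) Let $f:I\to\mathbb R$ be $\mathcal G$-convex, $g\in\mathcal G$, and $t_1<t_2$ in $I$ with $g(t_i)=f(t_i)$ for $i=1,2$. Then $g(t)\ge f(t)$ for all $t\in[t_1,t_2]$ and $g(t)\le f(t)$ for all $t\in I\setminus[t_1,t_2]$. (ii) Let $f:I\to\mathbb R$ be such that for all $t_1<t_2$ in $I$ there is $g\in\mathcal G$ with $g(t_i)=f(t_i)$, $i=1,2$, and $g(t)\ge f(t)$ for all $t\in[t_1,t_2]$. Then the right derivative of $f$ exists on $I\setminus\{\sup I\}$ and the left derivative on $I\setminus\{\inf I\}$; moreover, for every $t_0\in I$ and every $v_0\in\partial^{\pm}f(t_0)$, the function $$s\mapsto\sqrt{f(t_0)^2+2(s-t_0)f(t_0)v_0+(s-t_0)^2}$$ belongs to $\mathcal G$ and is a $\mathcal G$-tangent of $f$ at $t_0$. In particular, $f$ is $\mathcal G$-convex.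
   Context: $\mathcal G:=\{t\mapsto\sqrt{(t-t_0)^2+h^2}:\ t_0\in\mathbb R,\ h\ge0\}$. A function $f:I\to\mathbb R$ is $\mathcal G$-convex if for every $t_0\in I$ there is $g\in\mathcal G$ (called a $\mathcal G$-tangent of $f$ at $t_0$) with $g(t_0)=f(t_0)$ and $g(s)\le f(s)$ for all $s\in I$. With $f^{\oplus}$, $f^{\ominus}$ the right and left derivatives: for $t$ in the interior of $I$, $\partial^{\pm}f(t):=[\min(f^{\ominus}(t),f^{\oplus}(t)),\max(f^{\ominus}(t),f^{\oplus}(t))]$; if $\inf I\in I$ then $\partial^{\pm}f(\inf I):=\{f^{\oplus}(\inf I)\}$; if $\sup I\in I$ then $\partial^{\pm}f(\sup I):=\{f^{\ominus}(\sup I)\}$. *)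

(* Defs.v *)
From HB Require Import structures.
From mathcomp Require Import all_boot all_order all_algebra.
From mathcomp Require Import all_classical all_reals all_analysis.
Set Implicit Arguments. Unset Strict Implicit. Unset Printing Implicit Defensive.
Import Order.TTheory GRing.Theory Num.Theory.
Import numFieldNormedType.Exports.
Local Open Scope classical_set_scope.
Local Open Scope ring_scope.

Definition Gfun {R : realType} (t0 h : R) : R -> R :=
  fun t => Num.sqrt ((t - t0) ^+ 2 + h ^+ 2).

Definition inG {R : realType} (g : R -> R) : Prop :=
  exists t0 h : R, 0 <= h /\ g = Gfun t0 h.

Definition G_tangent {R : realType} (I : set R) (f : R -> R) (t0 : R)
    (g : R -> R) : Prop :=
  inG g /\ g t0 = f t0 /\ (forall s, I s -> g s <= f s).

Definition G_convex {R : realType} (I : set R) (f : R -> R) : Prop :=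
  forall t0, I t0 -> exists g, G_tangent I f t0 g.

Definition right_deriv {R : realType} (f : R -> R) (t l : R) : Prop :=
  (fun s => (f s - f t) / (s - t)) @ t^'+ --> l.
Definition left_deriv {R : realType} (f : R -> R) (t l : R) : Prop :=
  (fun s => (f s - f t) / (s - t)) @ t^'- --> l.

(* t is not the supremum (resp. infimum) of I, i.e. I has points to its right
   (resp. left). For t in I: t <> sup I iff has_right, t <> inf I iff has_left. *)
Definition has_right {R : realType} (I : set R) (t : R) : Prop :=
  exists b, I b /\ t < b.
Definition has_left {R : realType} (I : set R) (t : R) : Prop :=
  exists a, I a /\ a < t.

Definition pm_subdiff {R : realType} (I : set R) (f : R -> R) (t0 v : R) : Prop :=
  [/\ I t0,
      has_left I t0 -> has_right I t0 ->
        exists lm lp, [/\ left_deriv f t0 lm, right_deriv f t0 lp &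
                          Num.min lm lp <= v <= Num.max lm lp],
      ~ has_left I t0 -> right_deriv f t0 v
    & ~ has_right I t0 -> left_deriv f t0 v].

Definition tangent_cand {R : realType} (f : R -> R) (t0 v0 : R) : R -> R :=
  fun s => Num.sqrt (f t0 ^+ 2 + 2 * (s - t0) * f t0 * v0 + (s - t0) ^+ 2).

(* Main.v *)
Require Import Defs.
From HB Require Import structures.
From mathcomp Require Import all_boot all_order all_algebra.
From mathcomp Require Import all_classical all_reals all_analysis.
From mathcomp Require Import ring lra.
Import Order.TTheory GRing.Theory Num.Theory.
Import numFieldNormedType.Exports.
Local Open Scope classical_set_scope.
Local Open Scope ring_scope.

Set Implicit Arguments. Unset Strict Implicit.

Section G.
Context {R : realType}.
Implicit Types c h x y : R.

Lemma Gge0 c h x : 0 <= Gfun c h x.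
Proof. exact: sqrtr_ge0. Qed.

Lemma Gsq c h x : Gfun c h x ^+ 2 = (x - c) ^+ 2 + h ^+ 2.
Proof. by rewrite /Gfun sqr_sqrtr // addr_ge0 // sqr_ge0. Qed.

Lemma Gle c h c' h' x y :
  (Gfun c h x <= Gfun c' h' y) = ((x - c) ^+ 2 + h ^+ 2 <= (y - c') ^+ 2 + h' ^+ 2).
Proof. by rewrite /Gfun ler_sqrt // addr_ge0 // sqr_ge0. Qed.

Lemma Glip1 c h x y : Gfun c h y - Gfun c h x <= `|y - x|.
Proof.
have A0 := Gge0 c h y; have B0 := Gge0 c h x.
have A2 := Gsq c h y; have B2 := Gsq c h x.
set A := Gfun c h y in A0 A2 *; set B := Gfun c h x in B0 B2 *.
have AB : (x - c) * (y - c) + h ^+ 2 <= A * B.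
  have H : ((x - c) * (y - c) + h ^+ 2) ^+ 2 <= (A * B) ^+ 2.
    rewrite exprMn A2 B2 -subr_ge0.
    have -> : ((y - c) ^+ 2 + h ^+ 2) * ((x - c) ^+ 2 + h ^+ 2) -
      ((x - c) * (y - c) + h ^+ 2) ^+ 2 = (h * (x - y)) ^+ 2 by ring.
    exact: sqr_ge0.
  have ABge0 : 0 <= A * B by apply: mulr_ge0.
  nra.
have d0 : 0 <= `|y - x| by [].
have d2 : `|y - x| ^+ 2 = (y - x) ^+ 2 by rewrite real_normK // num_real.
nra.
Qed.

Lemma part_i (I : set R) (hI : is_interval I) f g t1 t2 :
  G_convex I f -> inG g -> I t1 -> I t2 -> t1 < t2 ->
  g t1 = f t1 -> g t2 = f t2 ->
  (forall t, t1 <= t <= t2 -> f t <= g t) /\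
  (forall t, I t -> ~ (t1 <= t <= t2) -> g t <= f t).
Proof.
move=> fc [c [h [h0 ->]]] I1 I2 lt12 e1 e2; split.
  move=> t /andP[a b]; have It : I t by apply: (hI t1 t2) => //; rewrite a b.
  have [_ [[c' [h' [h'0 ->]]] [gt gle]]] := fc t It.
  rewrite -gt.
  have q1 := gle t1 I1; rewrite -e1 Gle in q1.
  have q2 := gle t2 I2; rewrite -e2 Gle in q2.
  rewrite Gle; nra.
move=> t It nt.
have [lt1|ge1] := ltrP t t1.
  have [_ [[c' [h' [h'0 ->]]] [gt gle]]] := fc t1 I1.
  apply: le_trans (gle t It).
  have q1 : Gfun c h t1 <= Gfun c' h' t1 by rewrite gt e1.
  have q2 := gle t2 I2; rewrite -e2 Gle in q2.
  rewrite Gle in q1; rewrite Gle; nra.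
have lt2 : t2 < t by rewrite ltNge; apply/negP => b; apply: nt; rewrite ge1 b.
have [_ [[c' [h' [h'0 ->]]] [gt gle]]] := fc t2 I2.
apply: le_trans (gle t It).
have q2 : Gfun c h t2 <= Gfun c' h' t2 by rewrite gt e2.
have q1 := gle t1 I1; rewrite -e1 Gle in q1.
rewrite Gle in q2; rewrite Gle; nra.
Qed.
End G.

Definition Hch {R : realType} (I : set R) (f : R -> R) :=
  forall t1 t2, I t1 -> I t2 -> t1 < t2 ->
    exists g, [/\ inG g, g t1 = f t1, g t2 = f t2 &
                  forall t, t1 <= t <= t2 -> f t <= g t].

Definition phi {R : realType} (f : R -> R) (x : R) := f x ^+ 2 - x ^+ 2.

Section Core.
Context {R : realType} (I : set R) (hI : is_interval I) (f : R -> R) (H : Hch I f).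

Lemma divle (a b A B : R) : 0 < a -> 0 < b -> A * b <= B * a -> A / a <= B / b.
Proof.
move=> a0 b0 h; rewrite ler_pdivrMr // mulrAC ler_pdivlMr //.
Qed.

Lemma cvg_near_eq' (F : set_system R) (FF : Filter F) (g1 g2 : R -> R) (l : R) :
  (\forall x \near F, g1 x = g2 x) -> g2 @ F --> l -> g1 @ F --> l.
Proof.
move=> E gl; apply: cvg_trans gl.
by apply: near_eq_cvg; apply: filterS E => x ->.
Qed.

Lemma chord_ge0 t1 t2 : I t1 -> I t2 -> t1 < t2 -> 0 <= f t1 /\ 0 <= f t2.
Proof.
move=> I1 I2 lt; have [g [[c [h [h0 ->]]] e1 e2 _]] := H I1 I2 lt.
by rewrite -e1 -e2 !Gge0.
Qed.

Lemma fge0 t b : I t -> I b -> t < b -> forall s, I s -> 0 <= f s.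
Proof.
move=> It Ib tb s Is; case: (ltrgtP s b) => [sb|bs|->].
- exact: (chord_ge0 Is Ib sb).1.
- exact: (chord_ge0 Ib Is bs).2.
- exact: (chord_ge0 It Ib tb).2.
Qed.

Lemma lip t1 t2 : I t1 -> I t2 -> t1 < t2 ->
  f t2 - f t1 <= t2 - t1 /\ f t1 - f t2 <= t2 - t1.
Proof.
move=> I1 I2 lt; have [g [[c [h [h0 ->]]] e1 e2 _]] := H I1 I2 lt.
rewrite -e1 -e2; have := Glip1 c h t1 t2; have := Glip1 c h t2 t1.
by rewrite distrC gtr0_norm ?subr_gt0.
Qed.

Lemma conv t1 t t2 : I t1 -> I t2 -> t1 < t -> t < t2 ->
  (phi f t - phi f t1) * (t2 - t1) <= (phi f t2 - phi f t1) * (t - t1).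
Proof.
move=> I1 I2 lt1 lt2; have lt : t1 < t2 by apply: lt_trans lt2.
have It : I t by apply: (hI I1 I2); rewrite !ltW.
have ft0 := (chord_ge0 It I2 lt2).1.
have [g [[c [h [h0 ->]]] e1 e2 le]] := H I1 I2 lt.
have fle : f t <= Gfun c h t by apply: le; rewrite !ltW.
have G0 := Gge0 c h t.
have ft2 : f t ^+ 2 <= (t - c) ^+ 2 + h ^+ 2 by rewrite -Gsq; nra.
have f1 : f t1 ^+ 2 = (t1 - c) ^+ 2 + h ^+ 2 by rewrite -e1 Gsq.
have f2 : f t2 ^+ 2 = (t2 - c) ^+ 2 + h ^+ 2 by rewrite -e2 Gsq.
have d0 : 0 <= t2 - t1 by rewrite subr_ge0 ltW.
have := ler_wpM2r d0 ft2.
rewrite /phi f1 f2; nra.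
Qed.

Lemma zero_case t s : I t -> I s -> t < s -> f t = 0 -> f s = s - t.
Proof.
move=> It Is ts ft0; have [g [[c [h [h0 ->]]] e1 e2 _]] := H It Is ts.
rewrite -e2; move: e1; rewrite ft0 => /eqP; rewrite /Gfun sqrtr_eq0 => hc.
have q1 := sqr_ge0 (t - c); have q2 := sqr_ge0 h.
have h2 : h ^+ 2 = 0 by apply/eqP; rewrite eq_le sqr_ge0 andbT; lra.
have c2 : (t - c) ^+ 2 = 0 by apply/eqP; rewrite eq_le sqr_ge0 andbT; lra.
move/eqP: c2; rewrite sqrf_eq0 subr_eq0 => /eqP <-.
by rewrite h2 addr0 sqrtr_sqr gtr0_norm // subr_gt0.
Qed.

Lemma idr (t : R) : x @[x --> t^'+] --> t.
Proof. exact: cvg_at_right_filter cvg_id. Qed.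

Lemma inI a b x : I a -> I b -> a <= x -> x <= b -> I x.
Proof. by move=> Ia Ib ax xb; apply: (hI Ia Ib); rewrite ax xb. Qed.

Lemma Qmono t u v : I t -> I v -> t < u -> u < v ->
  (phi f u - phi f t) / (u - t) <= (phi f v - phi f t) / (v - t).
Proof.
move=> It Iv tu uv; apply: divle; rewrite ?subr_gt0 //; first exact: lt_trans uv.
exact: conv.
Qed.

Lemma Qcross s t u : I s -> I u -> s < t -> t < u ->
  (phi f s - phi f t) / (s - t) <= (phi f u - phi f t) / (u - t).
Proof.
move=> Is Iu st tu.
have -> : (phi f s - phi f t) / (s - t) = (phi f t - phi f s) / (t - s).
  by rewrite -opprB -(opprB t) invrN mulrNN.
apply: divle; rewrite ?subr_gt0 //.
have := conv Is Iu st tu; nra.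
Qed.

Lemma fcont t b : I t -> I b -> t < b -> f x @[x --> t^'+] --> f t.
Proof.
move=> It Ib tb; apply/cvgrPdist_le => e e0; near=> x.
have tx : t < x by near: x; exact: nbhs_right_gt.
have xb : x <= b by near: x; exact: nbhs_right_ltW.
have xe : x - t < e by near: x; exact: nbhs_right_ltDr.
have Ix : I x := inI It Ib (ltW tx) xb.
have [l1 l2] := lip It Ix tx.
rewrite ler_norml; apply/andP; split; lra.
Unshelve. all: by end_near. Qed.

Lemma right_exists t b : I t -> I b -> t < b -> exists l, right_deriv f t l.
Proof.
move=> It Ib tb.
have f0 := fge0 It Ib tb.
pose Q := fun s => (phi f s - phi f t) / (s - t).
have Qlb : forall u, t < u -> u <= b -> - 2 * f t - 2 * b <= Q u.
  move=> u tu ub; have Iu : I u := inI It Ib (ltW tu) ub.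
  have [l1 l2] := lip It Iu tu; have fu0 := f0 u Iu; have ft0 := f0 t It.
  rewrite /Q ler_pdivlMr ?subr_gt0 // /phi; nra.
have Qc : cvg (Q x @[x --> t^'+]).
  apply: nondecreasing_at_right_is_cvgr.
  - near=> x; move=> u v; rewrite !in_itv/= => /andP[tu ux] /andP[tv vx].
    rewrite le_eqVlt => /predU1P[->//|uv].
    have xb : x < b by near: x; exact: nbhs_right_lt.
    apply: Qmono => //; apply: (inI It Ib (ltW tv)).
    exact: ltW (lt_trans vx xb).
  - near=> x; exists (- 2 * f t - 2 * b) => _ [u /= ux <-].
    move: ux; rewrite in_itv/= => /andP[tu ux].
    have xb : x < b by near: x; exact: nbhs_right_lt.
    by apply: Qlb => //; rewrite ltW // (lt_trans ux xb).
set LQ := lim (Q x @[x --> t^'+]).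
have fc := fcont It Ib tb.
case: (eqVneq (f t) 0) => [ft0 | ftn0].
- exists 1; apply: (@cvg_near_eq' _ _ _ (fun=> 1)); last exact: cvg_cst.
  near=> x.
  have tx : t < x by near: x; exact: nbhs_right_gt.
  have xb : x <= b by near: x; exact: nbhs_right_ltW.
  have Ix : I x := inI It Ib (ltW tx) xb.
  by rewrite (zero_case It Ix tx ft0) ft0 subr0 divff // subr_eq0 gt_eqF.
- have ftp : 0 < f t by rewrite lt_neqAle eq_sym ftn0 f0.
  exists ((LQ + (t + t)) / (f t + f t)).
  apply: (@cvg_near_eq' _ _ _ (fun x => (Q x + (x + t)) / (f x + f t))).
    near=> x.
    have tx : t < x by near: x; exact: nbhs_right_gt.
    have xb : x <= b by near: x; exact: nbhs_right_ltW.
    have Ix : I x := inI It Ib (ltW tx) xb.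
    have fx0 := f0 x Ix.
    have n1 : x - t != 0 by rewrite subr_eq0 gt_eqF.
    have n2 : f x + f t != 0 by rewrite gt_eqF // ltr_wpDl.
    rewrite /Q /phi; field.
    by rewrite n1 n2.
  apply: cvgM; first by apply: cvgD; [exact: Qc | apply: cvgD; [exact: idr | exact: cvg_cst]].
  apply: cvgV; first by rewrite gt_eqF // addr_gt0.
  by apply: cvgD; [exact: fc | exact: cvg_cst].
Unshelve. all: by end_near. Qed.

Lemma right_support t b l : I t -> I b -> t < b -> right_deriv f t l ->
  (forall s, I s -> phi f t + (2 * f t * l - 2 * t) * (s - t) <= phi f s)
  /\ -1 <= l <= 1.
Proof.
move=> It Ib tb Dl.
have f0 := fge0 It Ib tb.
have fc := fcont It Ib tb.
pose Q := fun s => (phi f s - phi f t) / (s - t).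
have QL : Q x @[x --> t^'+] --> l * (f t + f t) - (t + t).
  apply: (@cvg_near_eq' _ _ _ (fun x => (f x - f t) / (x - t) * (f x + f t) - (x + t))).
    near=> x.
    have tx : t < x by near: x; exact: nbhs_right_gt.
    have n1 : x - t != 0 by rewrite subr_eq0 gt_eqF.
    rewrite /Q /phi; field.
    by rewrite n1.
  apply: cvgB; last by apply: cvgD; [exact: idr | exact: cvg_cst].
  apply: cvgM; first exact: Dl.
  by apply: cvgD; [exact: fc | exact: cvg_cst].
have E : l * (f t + f t) - (t + t) = 2 * f t * l - 2 * t by ring.
rewrite E in QL.
split.
  move=> s Is; case: (ltrgtP s t) => [st|ts|->]; last by rewrite subrr mulr0 addr0.
    have K : Q s <= 2 * f t * l - 2 * t.
      apply: (ler_cvg_to (cvg_cst (Q s)) QL); near=> u.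
      have tu : t < u by near: u; exact: nbhs_right_gt.
      have ub : u <= b by near: u; exact: nbhs_right_ltW.
      have Iu : I u := inI It Ib (ltW tu) ub.
      exact: Qcross.
    have QE : Q s = (phi f t - phi f s) / (t - s).
      by rewrite /Q -opprB -(opprB t) invrN mulrNN.
    rewrite QE ler_pdivrMr ?subr_gt0 // in K.
    nra.
  have K : 2 * f t * l - 2 * t <= Q s.
    apply: (ler_cvg_to QL (cvg_cst (Q s))); near=> u.
    have tu : t < u by near: u; exact: nbhs_right_gt.
    have us : u < s by near: u; exact: nbhs_right_lt.
    exact: Qmono.
  move: K; rewrite /Q ler_pdivlMr ?subr_gt0 //.
  nra.
apply/andP; split.
  apply: (ler_cvg_to (cvg_cst (-1 : R)) Dl); near=> x.
  have tx : t < x by near: x; exact: nbhs_right_gt.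
  have xb : x <= b by near: x; exact: nbhs_right_ltW.
  have Ix : I x := inI It Ib (ltW tx) xb.
  have [l1 l2] := lip It Ix tx.
  rewrite /= ler_pdivlMr ?subr_gt0 //; lra.
apply: (ler_cvg_to Dl (cvg_cst (1 : R))); near=> x.
have tx : t < x by near: x; exact: nbhs_right_gt.
have xb : x <= b by near: x; exact: nbhs_right_ltW.
have Ix : I x := inI It Ib (ltW tx) xb.
have [l1 l2] := lip It Ix tx.
rewrite /= ler_pdivrMr ?subr_gt0 //; lra.
Unshelve. all: by end_near. Qed.
End Core.

Section Refl.
Context {R : realType}.

Definition rI (I : set R) := [set x | I (- x)].
Definition rf (f : R -> R) := fun x => f (- x).

Lemma rI_interval (I : set R) : is_interval I -> is_interval (rI I).
Proof.
move=> hI x y Ix Iy z /andP[xz zy]; rewrite /rI/=.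
by apply: (hI _ _ Iy Ix); rewrite !lerN2 zy xz.
Qed.

Lemma rHch (I : set R) (f : R -> R) : Hch I f -> Hch (rI I) (rf f).
Proof.
move=> H t1 t2 I1 I2 lt; rewrite /rI /= in I1 I2.
have lt' : - t2 < - t1 by rewrite ltrN2.
have [g [[c [h [h0 ->]]] e1 e2 le]] := H _ _ I2 I1 lt'.
have GN : forall x, Gfun (- c) h x = Gfun c h (- x).
  by move=> x; rewrite /Gfun -opprD sqrrN opprK.
exists (Gfun (- c) h); split.
- by exists (- c), h.
- by rewrite GN e2.
- by rewrite GN e1.
- move=> t /andP[a b]; rewrite GN /rf; apply: le.
  by rewrite !lerN2 a b.
Qed.

Lemma right_to_left (f : R -> R) (t l : R) : right_deriv (rf f) (- t) l -> left_deriv f t (- l).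
Proof.
rewrite /right_deriv /left_deriv /rf => h; apply/cvg_at_leftNP.
have -> : ((fun s => (f s - f t) / (s - t)) \o -%R) =
    (fun s => - ((f (- s) - f (- - t)) / (s - - t))).
  by apply/funext => s /=; rewrite opprK -opprD invrN mulrN.
exact: cvgN h.
Qed.

Lemma left_to_right (f : R -> R) (t l : R) : left_deriv f t l -> right_deriv (rf f) (- t) (- l).
Proof.
rewrite /right_deriv /left_deriv /rf => /cvg_at_leftNP h.
have -> : (fun s => (f (- s) - f (- - t)) / (s - - t)) =
    (fun s => - (((fun s => (f s - f t) / (s - t)) \o -%R) s)).
  by apply/funext => s /=; rewrite opprK -opprD invrN mulrN opprK.
exact: cvgN h.
Qed.

Lemma phi_rf (f : R -> R) (x : R) : phi (rf f) x = phi f (- x).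
Proof. by rewrite /phi /rf sqrrN. Qed.

Lemma left_exists (I : set R) (f : R -> R) (hI : is_interval I) (H : Hch I f) t a :
  I t -> I a -> a < t -> exists l, left_deriv f t l.
Proof.
move=> It Ia at'.
have It' : rI I (- t) by rewrite /rI /= opprK.
have Ia' : rI I (- a) by rewrite /rI /= opprK.
have lt : - t < - a by rewrite ltrN2.
have [l hl] := right_exists (rI_interval hI) (rHch H) It' Ia' lt.
by exists (- l); apply: right_to_left.
Qed.

Lemma left_support (I : set R) (f : R -> R) (hI : is_interval I) (H : Hch I f) t a l :
  I t -> I a -> a < t -> left_deriv f t l ->
  (forall s, I s -> phi f t + (2 * f t * l - 2 * t) * (s - t) <= phi f s)
  /\ -1 <= l <= 1.
Proof.
move=> It Ia at' hl.
have It' : rI I (- t) by rewrite /rI /= opprK.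
have Ia' : rI I (- a) by rewrite /rI /= opprK.
have lt : - t < - a by rewrite ltrN2.
have [sp bd] := right_support (rI_interval hI) (rHch H) It' Ia' lt (left_to_right hl).
split; last by move: bd; rewrite lerNr opprK lerNl => /andP[p q]; rewrite p q.
move=> s Is.
have Is' : rI I (- s) by rewrite /rI /= opprK.
have := sp _ Is'; rewrite !phi_rf !opprK /rf opprK.
move=> K; nra.
Qed.


Definition goodv (I : set R) (f : R -> R) (t v : R) :=
  -1 <= v <= 1 /\
  forall s, I s -> phi f t + (2 * f t * v - 2 * t) * (s - t) <= phi f s.

Lemma good_between (I : set R) (f : R -> R) t a b v :
  0 <= f t -> goodv I f t a -> goodv I f t b ->
  Num.min a b <= v <= Num.max a b -> goodv I f t v.
Proof.
move=> f0 [ba sa] [bb sb]; rewrite minEle maxEle.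
case: ifP => ab /andP[av vb].
  split; first by move: ba bb => /andP[? ?] /andP[? ?]; apply/andP; split; lra.
  move=> s Is; have := sa s Is; have := sb s Is.
  case: (lerP 0 (s - t)) => st.
    have P : 0 <= f t * (b - v) * (s - t) by rewrite !mulr_ge0 // subr_ge0.
    nra.
  have P : 0 <= f t * (v - a) * (t - s).
    by rewrite !mulr_ge0 // subr_ge0 // ltW // -subr_lt0.
  nra.
split; first by move: ba bb => /andP[? ?] /andP[? ?]; apply/andP; split; lra.
move=> s Is; have := sa s Is; have := sb s Is.
case: (lerP 0 (s - t)) => st.
  have P : 0 <= f t * (a - v) * (s - t) by rewrite !mulr_ge0 // subr_ge0.
  nra.
have P : 0 <= f t * (v - b) * (t - s).
  by rewrite !mulr_ge0 // subr_ge0 // ltW // -subr_lt0.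
nra.
Qed.

Lemma good_tangent (I : set R) (f : R -> R) t v :
  (forall s, I s -> 0 <= f s) -> I t -> goodv I f t v ->
  inG (tangent_cand f t v) /\ G_tangent I f t (tangent_cand f t v).
Proof.
move=> f0 It [/andP[v1 v2] sp].
have iG : inG (tangent_cand f t v).
  exists (t - f t * v), (f t * Num.sqrt (1 - v ^+ 2)); split.
    by apply: mulr_ge0; [exact: f0 | exact: sqrtr_ge0].
  apply/funext => s; rewrite /tangent_cand /Gfun; congr Num.sqrt.
  rewrite exprMn sqr_sqrtr; last by nra.
  ring.
split => //; split => //; split.
  rewrite /tangent_cand.
  have -> : f t ^+ 2 + 2 * (t - t) * f t * v + (t - t) ^+ 2 = f t ^+ 2.
    by rewrite subrr; ring.
  by rewrite sqrtr_sqr ger0_norm // f0.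
move=> s Is; have fs0 := f0 s Is; have := sp s Is.
rewrite /tangent_cand /phi => K.
rewrite -[leRHS](ger0_norm fs0) -sqrtr_sqr; apply: ler_wsqrtr.
nra.
Qed.

Theorem main (I : set R)
  (hI : is_interval I) (hnd : exists a b, I a /\ I b /\ a < b) :
  (forall (f g : R -> R) (t1 t2 : R),
     G_convex I f -> inG g -> I t1 -> I t2 -> t1 < t2 ->
     g t1 = f t1 -> g t2 = f t2 ->
     (forall t, t1 <= t <= t2 -> f t <= g t) /\
     (forall t, I t -> ~ (t1 <= t <= t2) -> g t <= f t)) /\
  (forall f : R -> R,
     (forall t1 t2, I t1 -> I t2 -> t1 < t2 ->
        exists g, [/\ inG g, g t1 = f t1, g t2 = f t2 &
                      forall t, t1 <= t <= t2 -> f t <= g t]) ->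
     [/\ (forall t, I t -> has_right I t -> exists l, right_deriv f t l),
         (forall t, I t -> has_left I t -> exists l, left_deriv f t l),
         (forall t0 v0, I t0 -> pm_subdiff I f t0 v0 ->
            inG (tangent_cand f t0 v0) /\ G_tangent I f t0 (tangent_cand f t0 v0))
       & G_convex I f]).
Proof.
split; first by move=> f g t1 t2; apply: part_i.
move=> f Hf; have H : Hch I f := Hf.
have [a [b [Ia [Ib ab]]]] := hnd.
have f0 := fge0 H Ia Ib ab.
have Rex : forall t, I t -> has_right I t -> exists l, right_deriv f t l.
  by move=> t It [b1 [Ib1 tb1]]; exact: (right_exists hI H It Ib1 tb1).
have Lex : forall t, I t -> has_left I t -> exists l, left_deriv f t l.
  by move=> t It [a1 [Ia1 at1]]; exact: (left_exists hI H It Ia1 at1).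
have Rg : forall t l, I t -> has_right I t -> right_deriv f t l -> goodv I f t l.
  move=> t l It [b' [Ib' tb']] hl.
  by have [p q] := right_support hI H It Ib' tb' hl; split.
have Lg : forall t l, I t -> has_left I t -> left_deriv f t l -> goodv I f t l.
  move=> t l It [a' [Ia' at']] hl.
  by have [p q] := left_support hI H It Ia' at' hl; split.
have side : forall t, I t -> has_left I t \/ has_right I t.
  move=> t It; case: (ltrP t b) => tb; first by right; exists b.
  by left; exists a; split => //; exact: lt_le_trans tb.
have both : forall t v, I t -> has_left I t -> has_right I t ->
    (exists lm lp, [/\ left_deriv f t lm, right_deriv f t lp &
                    Num.min lm lp <= v <= Num.max lm lp]) -> goodv I f t v.
  move=> t v It hl hr [lm [lp [dm dp mv]]].
  exact: good_between (f0 t It) (Lg _ _ It hl dm) (Rg _ _ It hr dp) mv.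
have tang : forall t0 v0, I t0 -> pm_subdiff I f t0 v0 ->
    inG (tangent_cand f t0 v0) /\ G_tangent I f t0 (tangent_cand f t0 v0).
  move=> t0 v0 It0 [_ Hb Hl Hr]; apply: good_tangent => //.
  case: (side t0 It0) => [hl|hr].
    have [hr|nhr] := pselect (has_right I t0); first exact: both (Hb hl hr).
    exact: Lg (Hr nhr).
  have [hl|nhl] := pselect (has_left I t0); first exact: both (Hb hl hr).
  exact: Rg (Hl nhl).
split => // t It.
case: (side t It) => [hl|hr].
  have [l hd] := Lex t It hl.
  by exists (tangent_cand f t l); apply: (good_tangent f0 It (Lg _ _ It hl hd)).2.
have [l hd] := Rex t It hr.
by exists (tangent_cand f t l); apply: (good_tangent f0 It (Rg _ _ It hr hd)).2.
Qed.
End Refl.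

Unset Implicit Arguments.

Theorem mainTheorem16 (R : realType) (I : set R)
  (hI : is_interval I) (hnd : exists a b, I a /\ I b /\ a < b) :
  (* (i) *)
  (forall (f g : R -> R) (t1 t2 : R),
     G_convex I f -> inG g -> I t1 -> I t2 -> t1 < t2 ->
     g t1 = f t1 -> g t2 = f t2 ->
     (forall t, t1 <= t <= t2 -> f t <= g t) /\
     (forall t, I t -> ~ (t1 <= t <= t2) -> g t <= f t)) /\
  (* (ii) *)
  (forall f : R -> R,
     (forall t1 t2, I t1 -> I t2 -> t1 < t2 ->
        exists g, [/\ inG g, g t1 = f t1, g t2 = f t2 &
                      forall t, t1 <= t <= t2 -> f t <= g t]) ->
     [/\ (forall t, I t -> has_right I t -> exists l, right_deriv f t l),
         (forall t, I t -> has_left I t -> exists l, left_deriv f t l),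
         (forall t0 v0, I t0 -> pm_subdiff I f t0 v0 ->
            inG (tangent_cand f t0 v0) /\ G_tangent I f t0 (tangent_cand f t0 v0))
       & G_convex I f]).
Proof. exact: main. Qed.
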